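(* Let $C_N$ be the undirected cycle on $N$ vertices, $r>0$ and $\delta\in[0,1]$, and consider the mixed $\delta$-updating process starting with a single mutant. Define $F_k:=rk+(N-k)$ and $$\gamma_k=\begin{cases}\dfrac{(1-\delta)/F_k+\delta/N}{(1-\delta)r/F_k+2r\delta/((1+r)N)}&\text{if }k=1,\\[8pt]\dfrac{(1-\delta)/F_k+2\delta/((1+r)N)}{(1-\delta)r/F_k+\delta/N}&\text{if }k=N-1,\\[8pt]\dfrac{(1-\delta)/F_k+2\delta/((1+r)N)}{(1-\delta)r/F_k+2r\delta/((1+r)N)}&\text{otherwise}.\end{cases}$$ Then $$\mathsf{fp}_r^\delta(C_N)=\frac{1}{1+\sum_{j=1}^{N-1}\prod_{k=1}^{j}\gamma_k}.$$
   Context: Mixed $\delta$-updating on an undirected unweighted graph $G=(V,E)$ with $N$ vertices: each vertex holds a mutant (fitness $r$) or wild-type (fitness $1$); $f_S(u)$ is the fitness at $u$ when $S$ is the mutant set. At each step, with probability $\delta$ a death-Birth step: choose $v$ uniformly to die, choose a neighbor $u$ of $v$ with probability proportional to $f_S(u)$, $u$ copies its type onto $v$; with probability $1-\delta$ a Birth-death step: choose $u$ with probability proportional to $f_S(u)$ among all vertices, choose a uniformly random neighbor $v$ of $u$, $u$ copies its type onto $v$. $\mathsf{fp}_r^\delta(G)=\frac1N\sum_{u\in V}\mathsf{fp}_r^\delta(G,\{u\})$, where $\mathsf{fp}_r^\delta(G,S_0)$ is the probability all vertices eventually become mutant from mutant set $S_0$ (on the cycle this is the same for every single starting vertex). *)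

(* Defs.v *)
From HB Require Import structures.
From mathcomp Require Import all_boot all_order all_algebra.
From mathcomp Require Import all_classical all_reals all_analysis.
Set Implicit Arguments. Unset Strict Implicit. Unset Printing Implicit Defensive.
Import Order.TTheory GRing.Theory Num.Theory.
Import numFieldNormedType.Exports.
Local Open Scope classical_set_scope.
Local Open Scope ring_scope.

Section Process.
Variables (R : realType) (V : finType) (adj : rel V).
Variables (r delta : R).

Definition fitness (S : {set V}) (u : V) : R := if u \in S then r else 1.

Definition degree (u : V) : R := #|[set v | adj u v]|%:R.

Definition copy_type (S : {set V}) (u v : V) : {set V} :=
  if u \in S then v |: S else S :\ v.

Definition pair_prob (S : {set V}) (u v : V) : R :=
  delta * (1 / #|V|%:R) *
    (fitness S u / \sum_(w | adj v w) fitness S w)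
  + (1 - delta) * (fitness S u / \sum_(w : V) fitness S w) * (1 / degree u).

Definition step_prob (S S' : {set V}) : R :=
  \sum_(u : V) \sum_(v : V | adj u v && (copy_type S u v == S')) pair_prob S u v.

Fixpoint tstep_prob (t : nat) (S S' : {set V}) : R :=
  match t with
  | 0%N => (S == S')%:R
  | t'.+1 => \sum_(S'' : {set V}) step_prob S S'' * tstep_prob t' S'' S'
  end.

(* fixation probability from S0: probability of eventually reaching the
   all-mutant (absorbing) state = limit of the probability of being in it
   at time t *)
Definition fix_prob (S0 : {set V}) : R :=
  lim ((fun t : nat => tstep_prob t S0 [set: V]) @ \oo).

Definition fix_prob_avg : R :=
  (1 / #|V|%:R) * \sum_(u : V) fix_prob [set u].
End Process.

Definition cycle_adj (N : nat) : rel 'I_N :=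
  fun u v => ((v : nat) == (u.+1 %% N)%N) || ((u : nat) == (v.+1 %% N)%N).

Definition F_k (R : realType) (N : nat) (r : R) (k : nat) : R :=
  r * k%:R + (N - k)%:R.

Definition gamma_k (R : realType) (N : nat) (r delta : R) (k : nat) : R :=
  let F := F_k N r k in
  if k == 1%N then
    ((1 - delta) / F + delta / N%:R) /
    ((1 - delta) * r / F + 2 * r * delta / ((1 + r) * N%:R))
  else if k == N.-1 then
    ((1 - delta) / F + 2 * delta / ((1 + r) * N%:R)) /
    ((1 - delta) * r / F + delta / N%:R)
  else
    ((1 - delta) / F + 2 * delta / ((1 + r) * N%:R)) /
    ((1 - delta) * r / F + 2 * r * delta / ((1 + r) * N%:R)).

(* Main.v *)
Require Import Defs.
From HB Require Import structures.
From mathcomp Require Import all_boot all_order all_algebra.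
From mathcomp Require Import all_classical all_reals all_analysis.
From mathcomp Require Import ring lra zify.
Set Implicit Arguments. Unset Strict Implicit. Unset Printing Implicit Defensive.
Import Order.TTheory GRing.Theory Num.Theory.
Import numFieldNormedType.Exports.
Local Open Scope classical_set_scope.
Local Open Scope ring_scope.

Section Gen.
Variables (R : realType) (V : finType) (adj : rel V) (r delta : R).
Local Notation P := (pair_prob adj r delta).
Local Notation step := (step_prob adj r delta).
Local Notation f := (@fitness R V r).


Lemma step_sumE S (H : {set V} -> R) :
  \sum_S' step S S' * H S' =
  \sum_u \sum_(v | adj u v) P S u v * H (copy_type S u v).
Proof.
rewrite /step_prob.
under eq_bigr => S' _ do rewrite big_distrl /=.
rewrite exchange_big /=; apply: eq_bigr => u _.
under eq_bigr => S' _ do rewrite big_distrl /=.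
rewrite (exchange_big_dep (fun v => adj u v)) /=; last by move=> ? ? _ /andP[].
apply: eq_bigr => v uv.
rewrite (eq_bigl (pred1 (copy_type S u v))); first by rewrite big_pred1_eq.
by move=> S'; rewrite /= uv eq_sym.
Qed.

Lemma tstepS t S :
  tstep_prob adj r delta t.+1 S [set: V] =
  \sum_u \sum_(v | adj u v) P S u v * tstep_prob adj r delta t (copy_type S u v) [set: V].
Proof. by rewrite /= step_sumE. Qed.

Hypothesis r_gt0 : 0 < r.
Hypothesis d_ge0 : 0 <= delta.
Hypothesis d_le1 : delta <= 1.
Hypothesis adj_sym : forall u v, adj u v = adj v u.
Hypothesis adj_nb : forall u, exists v, adj u v.

Lemma fit_gt0 S u : 0 < f S u.
Proof. by rewrite /fitness; case: ifP. Qed.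

Lemma sumfit_gt0 S u : 0 < \sum_(w | adj u w) f S w.
Proof.
have [w uw] := adj_nb u.
rewrite (bigD1 w) //=; apply: ltr_wpDr; last exact: fit_gt0.
by apply: sumr_ge0 => i _; apply/ltW/fit_gt0.
Qed.


Lemma deg_ge0 u : 0 <= degree R adj u.
Proof. by rewrite /degree ler0n. Qed.

Lemma P_ge0 S u v : 0 <= P S u v.
Proof.
have h1 := fit_gt0 S u; have h2 := sumfit_gt0 S v.
have h3 : 0 <= \sum_w f S w by apply: sumr_ge0 => i _; apply/ltW/fit_gt0.
rewrite /pair_prob; apply: addr_ge0; apply: mulr_ge0; try apply: mulr_ge0.
all: try apply: divr_ge0.
all: rewrite ?subr_ge0 ?ler01 ?ler0n ?deg_ge0 //.
all: rewrite ?invr_ge0 ?deg_ge0 //; exact: ltW.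
Qed.

Lemma deg_gt0 u : 0 < degree R adj u.
Proof.
have [w uw] := adj_nb u.
rewrite /degree ltr0n; apply/card_gt0P; exists w; by rewrite inE.
Qed.

Lemma P_sum (u0 : V) S : \sum_u \sum_(v | adj u v) P S u v = 1.
Proof.
rewrite /pair_prob.
under eq_bigr => u _ do rewrite big_split /=.
rewrite big_split /=.
have N0 : (#|V|%:R : R) != 0 by rewrite pnatr_eq0 (cardD1 u0).
have -> : \sum_u \sum_(v | adj u v) delta * (1 / #|V|%:R) * (f S u / \sum_(w | adj v w) f S w)
   = delta.
  under eq_bigr => u _ do rewrite -big_distrr /=.
  rewrite -big_distrr /=.
  rewrite (exchange_big_dep predT) //=.
  under eq_bigr => v _.
    rewrite (eq_bigl (fun u => adj v u)); last by move=> u; rewrite /= adj_sym.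
    rewrite -big_distrl /= mulfV; last by rewrite gt_eqF // sumfit_gt0.
  over.
  by rewrite sumr_const div1r -mulrA mulVf // mulr1.
under eq_bigr => u _.
  rewrite sumr_const -mulr_natr.
  have -> : (#|adj u|%:R : R) = degree R adj u.
    rewrite /degree; congr (_%:R); apply: eq_card => v.
by apply/idP/idP; rewrite in_setE.
  rewrite div1r divfK; last by rewrite gt_eqF // deg_gt0.
over.
rewrite -big_distrr /= -big_distrl /= mulfV ?mulr1; first by rewrite addrC subrK.
by rewrite gt_eqF // (bigD1 u0) //= ltr_wpDr ?fit_gt0 // sumr_ge0 // => i _; apply/ltW/fit_gt0.
Qed.
Local Notation g t S := (tstep_prob adj r delta t S [set: V]).

Lemma g_ge0 t S : 0 <= g t S.
Proof.
elim: t S => [|t IH] S; first by rewrite /= ler0n.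
rewrite tstepS; apply: sumr_ge0 => u _; apply: sumr_ge0 => v _.
by apply: mulr_ge0; [apply: P_ge0 | apply: IH].
Qed.

Variable u0 : V.

Lemma g_le1 t S : g t S <= 1.
Proof.
elim: t S => [|t IH] S; first by rewrite /=; case: (S == _).
rewrite tstepS -(P_sum u0 S); apply: ler_sum => u _; apply: ler_sum => v _.
by rewrite -[leRHS]mulr1; apply: ler_wpM2l; [apply: P_ge0 | apply: IH].
Qed.

Lemma g_T t : g t [set: V] = 1.
Proof.
elim: t => [|t IH]; first by rewrite /= eqxx.
rewrite tstepS -[RHS](P_sum u0 [set: V]); apply: eq_bigr => u _; apply: eq_bigr => v _.
by rewrite /copy_type finset.in_setT finset.setUT IH mulr1.
Qed.

Lemma g_0 t : g t finset.set0 = 0.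
Proof.
elim: t => [|t IH].
  rewrite /=; case: eqP => // /finset.setP /(_ u0); by rewrite finset.in_set0 finset.in_setT.
rewrite tstepS; apply: big1 => u _; apply: big1 => v _.
have -> : copy_type finset.set0 u v = finset.set0.
  by rewrite /copy_type finset.in_set0; apply/finset.setP => x; rewrite !inE andbF.
by rewrite IH mulr0.
Qed.

Lemma g_mono t S : g t S <= g t.+1 S.
Proof.
elim: t S => [|t IH] S.
  rewrite [X in X <= _]/=; case: eqP => [->|_]; last exact: g_ge0.
  by rewrite g_T.
rewrite (tstepS t.+1) (tstepS t); apply: ler_sum => u _; apply: ler_sum => v _.
by apply: ler_wpM2l; [apply: P_ge0 | apply: IH].
Qed.
End Gen.
Section Cyc.
Variable n : nat.
Local Notation N := n.+3.
Local Notation V := 'I_N.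
Definition one' : V := inZp 1.
Definition pt (a : V) (j : nat) : V := a + inZp j.
Definition dd (a x : V) : nat := val (x - a).

Lemma val_inZp j : val (inZp j : V) = (j %% N)%N.
Proof. by []. Qed.

Lemma ptS a j : pt a j + one' = pt a j.+1.
Proof.
rewrite /pt -addrA; congr (_ + _); apply: val_inj.
by rewrite /= modnDm addn1.
Qed.

Lemma ptP a j : pt a j - one' = pt a (j + n.+2).
Proof.
rewrite /pt -addrA; congr (_ + _); apply: val_inj.
by rewrite /= modnDm (modn_small (_ : 1 < N)%N) // subSS subn0.
Qed.

Lemma pt0 a : pt a 0 = a.
Proof. rewrite /pt; have -> : (inZp 0 : V) = 0 by apply: val_inj. by rewrite addr0. Qed.

Lemma dd_pt a j : dd a (pt a j) = (j %% N)%N.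
Proof. by rewrite /dd /pt addrC addKr. Qed.

Lemma dd_aa a : dd a a = 0%N.
Proof. by rewrite /dd subrr. Qed.

Lemma dd_lt a x : (dd a x < N)%N.
Proof. exact: ltn_ord. Qed.

Lemma pt_dd a x : pt a (dd a x) = x.
Proof.
rewrite /pt /dd; have -> : (inZp (val (x - a)) : V) = x - a by apply: valZpK.
by rewrite addrC subrK.
Qed.

Lemma dd_add1 a u : dd a (u + one') = ((dd a u).+1 %% N)%N.
Proof. by rewrite -{1}(pt_dd a u) ptS dd_pt. Qed.

Lemma dd_sub1 a u : dd a (u - one') = ((dd a u + n.+2) %% N)%N.
Proof. by rewrite -{1}(pt_dd a u) ptP dd_pt. Qed.

Lemma dd_eq a x y : (x == y) = (dd a x == dd a y).
Proof.
apply/eqP/eqP => [->//|h]; rewrite -(pt_dd a x) -(pt_dd a y) h //.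
Qed.

Lemma dd_shift a j x : dd (pt a j) x = ((dd a x + (N - j %% N)) %% N)%N.
Proof. by rewrite /dd /pt opprD addrA /= modnDmr. Qed.

Lemma am1 a : a - one' = pt a n.+2.
Proof. by rewrite -{1}(pt0 a) ptP. Qed.

Lemma ap1 a : a + one' = pt a 1.
Proof. by rewrite -{1}(pt0 a) ptS. Qed.

Lemma modN_small j : (j < N)%N -> (j %% N = j)%N.
Proof. exact: modn_small. Qed.

Lemma modNS j : ((j.+1 + n.+2) %% N = j %% N)%N.
Proof. by rewrite addSnnS addnC modnDl. Qed.

Lemma adjE u v : cycle_adj u v = (v == u + one') || (v == u - one').
Proof.
rewrite /cycle_adj; congr (_ || _).
  by rewrite -val_eqE /= modnDmr addn1.
by rewrite [RHS]eq_sym subr_eq -val_eqE /= modnDmr addn1.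
Qed.

Lemma pm_neq u : (u + one' == u - one') = false.
Proof. by rewrite ap1 am1 (dd_eq u) !dd_pt !modn_small. Qed.

Lemma sum_adj (R : realType) u (G : V -> R) :
  \sum_(v | cycle_adj u v) G v = G (u + one') + G (u - one').
Proof.
rewrite (bigD1 (u + one')) /=; last by rewrite adjE eqxx.
rewrite (big_pred1 (u - one')) // => v; rewrite /= adjE.
case: (eqVneq v (u - one')) => [->|hv]; first by rewrite orbT eq_sym pm_neq.
by rewrite orbF; case: (v == _).
Qed.

Lemma adj_sym (u v : V) : cycle_adj u v = cycle_adj v u.
Proof. by rewrite /cycle_adj orbC. Qed.

Lemma adj_nb (u : V) : exists v, cycle_adj u v.
Proof. by exists (u + one'); rewrite adjE eqxx. Qed.

Lemma deg2 (R : realType) u : degree R (@cycle_adj N) u = 2.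
Proof.
have -> : degree R (@cycle_adj N) u = \sum_(v | cycle_adj u v) (1 : R).
  rewrite sumr_const /degree; congr (_%:R); apply: eq_card => v.
  by apply/idP/idP; rewrite in_setE.
by rewrite sum_adj.
Qed.

Definition arc (a : V) (k : nat) : {set V} := [set x | (dd a x < k)%N]%SET.

Lemma in_arc a k x : (x \in arc a k) = (dd a x < k)%N.
Proof. by rewrite inE. Qed.

Lemma fit_arc (R : realType) (r : R) a k x :
  fitness r (arc a k) x = if (dd a x < k)%N then r else 1.
Proof. by rewrite /fitness in_arc. Qed.

Lemma card_arc a k : (k <= N)%N -> #|arc a k| = k.
Proof.
move=> kN.
have -> : arc a k = (fun i : V => a + i) @: [set i : V | (val i < k)%N]%SET.
  apply/finset.setP => x; rewrite in_arc; apply/idP/imsetP.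
    by move=> h; exists (x - a); rewrite ?inE // addrC subrK.
  by case=> i; rewrite inE => hi ->; rewrite /dd addrC addKr.
rewrite card_imset; last exact: addrI.
have -> : [set i : V | (val i < k)%N]%SET = (widen_ord kN) @: [set: 'I_k]%SET.
  apply/finset.setP => i; apply/idP/imsetP; rewrite inE.
    by move=> h; exists (Ordinal h) => //; apply: val_inj.
  by case=> j _ ->; rewrite /= ltn_ord.
by rewrite card_imset ?cardsT ?card_ord // => x y /(congr1 val) /= /val_inj.
Qed.

Lemma arcT a k : (k <= N)%N -> (arc a k == [set: V]%SET) = (k == N).
Proof.
move=> kN; rewrite eqEcard finset.subsetT cardsT card_ord card_arc //=.
by rewrite eqn_leq kN.
Qed.

Lemma arc0 a : arc a 0 = finset.set0.
Proof. by apply/finset.setP => x; rewrite in_arc. Qed.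

Lemma arcN a : arc a N = [set: V]%SET.
Proof. by apply/finset.setP => x; rewrite in_arc finset.in_setT dd_lt. Qed.

Lemma arc1 a : arc a 1 = [set a]%SET.
Proof.
apply/finset.setP => x; rewrite in_arc finset.in_set1 (dd_eq a) dd_aa.
by rewrite ltnS leqn0.
Qed.

Lemma pt_mod a j : pt a j = pt a (j %% N).
Proof. by rewrite /pt; congr (_ + _); apply: val_inj; rewrite /= modn_mod. Qed.

Lemma ptP' a j : pt a j.+1 - one' = pt a j.
Proof. by rewrite ptP pt_mod modNS -pt_mod. Qed.

Lemma ptN a : pt a N = a.
Proof. by rewrite pt_mod modnn pt0. Qed.

Lemma dd_mem a x : (dd a x < N)%N. Proof. exact: ltn_ord. Qed.

End Cyc.
Arguments one' {n}.

Section Step.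
Variable n : nat.
Local Notation N := n.+3.
Local Notation V := 'I_N.
Variables (R : realType) (r delta : R).
Hypothesis r_gt0 : 0 < r.
Hypothesis d_ge0 : 0 <= delta.
Hypothesis d_le1 : delta <= 1.
Local Notation P := (pair_prob (@cycle_adj N) r delta).
Local Notation f := (@fitness R 'I_N r).

Definition pup k : R := delta * (1 / N%:R) * (r / ((if k == N.-1 then r else 1) + r))
  + (1 - delta) * (r / F_k N r k) * (1 / 2).
Definition pdn k : R := delta * (1 / N%:R) * (1 / (1 + (if k == 1%N then 1 else r)))
  + (1 - delta) * (1 / F_k N r k) * (1 / 2).

Lemma sumfit (a : V) k : (k <= N)%N -> \sum_x f (arc a k) x = F_k N r k.
Proof.
move=> kN.
have fE x : f (arc a k) x = 1 + (x \in arc a k)%:R * (r - 1).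
  by rewrite /fitness; case: (x \in _); rewrite ?mul1r ?mul0r ?addr0 // addrC subrK.
under eq_bigr => x _ do rewrite fE.
rewrite big_split /= -big_distrl /= sumr_const card_ord.
have -> : \sum_(x : V) ((x \in arc a k)%:R : R) = #|arc a k|%:R.
  rewrite (eq_bigr (fun x => if x \in arc a k then 1 else 0)); last by move=> x _; case: (_ \in _).
  by rewrite -big_mkcond /= sumr_const.
rewrite card_arc // /F_k natrB //; ring.
Qed.

Lemma Pval (a u v : V) k : (k <= N)%N -> P (arc a k) u v =
  delta * (1 / N%:R) * (f (arc a k) u / (f (arc a k) (v + one') + f (arc a k) (v - one')))
  + (1 - delta) * (f (arc a k) u / F_k N r k) * (1 / 2).
Proof. by move=> kN; rewrite /pair_prob card_ord sum_adj sumfit // deg2. Qed.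

Section Pts.
Variables (a : V) (m : nat).
Hypothesis hm : (m.+1 < N)%N.
Let S := arc a m.+1.

Lemma hmN : (m < N)%N. Proof. by apply: ltn_trans hm. Qed.

Lemma P1 : P S (pt a m) (pt a m + one') = pup m.+1.
Proof.
rewrite Pval; last exact: ltnW.
rewrite !ptS ptP' !fit_arc !dd_pt (modn_small hmN) ltnSn /pup.
case: (eqVneq m n.+1) => [->|ne].
  by rewrite modnn /= eqxx.
rewrite modn_small; last by move: hm ne; clear; lia.
rewrite (_ : (m.+2 < m.+1)%N = false); last by clear; lia.
by rewrite (_ : (m.+1 == N.-1) = false) //; apply/negbTE; move: ne; clear; lia.
Qed.

Lemma P4 : P S (pt a 0) (pt a 0 - one') = pup m.+1.
Proof.
rewrite Pval; last exact: ltnW.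
rewrite ptP add0n ptS ptP !fit_arc !dd_pt mod0n /pup.
have -> : (n.+3 %% N = 0)%N by apply: modnn.
have -> : ((n.+2 + n.+2) %% N = n.+1)%N by rewrite modNS modn_small.
rewrite ltn0Sn [r + _]addrC.
case: (eqVneq m n.+1) => [->|ne]; first by rewrite ltnSn /= eqxx.
rewrite (_ : (n.+1 < m.+1)%N = false); last by move: hm ne; clear; lia.
by rewrite (_ : (m.+1 == N.-1) = false) //; apply/negbTE; move: ne; clear; lia.
Qed.

Lemma P2 : P S (pt a n.+2) (pt a n.+2 + one') = pdn m.+1.
Proof.
rewrite Pval; last exact: ltnW.
rewrite ptS ptN ap1 am1 !fit_arc !dd_pt /pdn.
rewrite (modn_small (_ : n.+2 < N)%N) // (modn_small (_ : 1 < N)%N) //.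
rewrite (_ : (n.+2 < m.+1)%N = false); last by move: hm; clear; lia.
rewrite ltnS [_ + 1]addrC.
by case: m hm => [|m'] //.
Qed.

Lemma P3 : P S (pt a m.+1) (pt a m.+1 - one') = pdn m.+1.
Proof.
rewrite Pval; last exact: ltnW.
rewrite ptP' ptS !fit_arc !dd_pt /pdn (modn_small hm) ltnn.
case: m hm => [|m'] hm'.
  by rewrite ptP !dd_pt add0n modn_small.
rewrite ptP' dd_pt modn_small; last by move: hm'; clear; lia.
by rewrite ltnS ltnW.
Qed.

Lemma C1 : copy_type S (pt a m) (pt a m + one') = arc a m.+2.
Proof.
rewrite /copy_type in_arc dd_pt (modn_small hmN) ltnSn ptS.
apply/finset.setP => x; rewrite finset.in_setU1 !in_arc (dd_eq a) dd_pt (modn_small hm).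
by apply/idP/idP; [case/orP => /eqP ?|]; lia.
Qed.

Lemma C2 : copy_type S (pt a n.+2) (pt a n.+2 + one') = arc (pt a 1) m.
Proof.
rewrite /copy_type in_arc dd_pt (modn_small (_ : n.+2 < N)%N) //.
rewrite (_ : (n.+2 < m.+1)%N = false); last by move: hm; clear; lia.
rewrite ptS ptN; apply/finset.setP => x; rewrite finset.in_setD1 !in_arc (dd_eq a) dd_aa.
rewrite dd_shift (modn_small (_ : 1 < N)%N) // subSS subn0.
have := dd_mem a x; case: (dd a x) => [|j] hj /=.
  by rewrite add0n modn_small // (_ : (n.+2 < m)%N = false) //; move: hm; clear; lia.
by rewrite modNS modn_small ?ltnS //; lia.
Qed.

Lemma C3 : copy_type S (pt a m.+1) (pt a m.+1 - one') = arc a m.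
Proof.
rewrite /copy_type in_arc dd_pt (modn_small hm) ltnn ptP'.
apply/finset.setP => x; rewrite finset.in_setD1 !in_arc (dd_eq a) dd_pt (modn_small hmN).
by apply/idP/idP; [case/andP|]; lia.
Qed.

Lemma C4 : copy_type S (pt a 0) (pt a 0 - one') = arc (pt a n.+2) m.+2.
Proof.
rewrite /copy_type in_arc dd_pt mod0n ltn0Sn ptP add0n.
apply/finset.setP => x; rewrite finset.in_setU1 !in_arc (dd_eq a) !dd_pt dd_shift.
rewrite (modn_small (_ : n.+2 < N)%N) // subSnn.
have := dd_mem a x; case: (eqVneq (dd a x) n.+2) => [->|ne] hx.
  by rewrite addn1 modnn.
by rewrite addn1 modn_small /=; lia.
Qed.

Lemma copy_same (T : {set V}) u v : (u \in T) = (v \in T) -> copy_type T u v = T.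
Proof.
rewrite /copy_type; case: ifP => hu hv; apply/finset.setP => x.
  by rewrite finset.in_setU1; case: eqVneq => // ->; rewrite -hv.
by rewrite finset.in_setD1; case: eqVneq => //= ->; rewrite -hv.
Qed.

Lemma arc_step (H : {set V} -> R) :
  \sum_u \sum_(v | cycle_adj u v) P S u v * H (copy_type S u v) =
  H S + pup m.+1 * (H (arc a m.+2) - H S) + pdn m.+1 * (H (arc (pt a 1) m) - H S)
      + pdn m.+1 * (H (arc a m) - H S) + pup m.+1 * (H (arc (pt a n.+2) m.+2) - H S).
Proof.
rewrite (eq_bigr (fun u => \sum_(v | cycle_adj u v) P S u v * H S
   + \sum_(v | cycle_adj u v) P S u v * (H (copy_type S u v) - H S))); last first.
  by move=> u _; rewrite -big_split; apply: eq_bigr => v _ /=; ring.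
rewrite big_split /=.
under eq_bigr => u _ do rewrite -big_distrl /=.
rewrite -big_distrl /= (P_sum delta r_gt0 (@adj_sym n) (@adj_nb n) a) mul1r.
under eq_bigr => u _ do rewrite (@sum_adj n R u (fun v => P S u v * (H (copy_type S u v) - H S))).
rewrite big_split /= -!addrA; congr (_ + _).
rewrite (bigD1 (pt a m)) //= (bigD1 (pt a n.+2)) /=; last first.
  by rewrite (dd_eq a) !dd_pt !modn_small //; move: hm; clear; lia.
rewrite big1 ?addr0 => [|u /andP[h1 h2]]; last first.
  have hu := dd_mem a u.
  move: h1 h2; rewrite !(dd_eq a) !dd_pt (modn_small hmN) (modn_small (_ : n.+2 < N)%N) // => h1 h2.
  rewrite copy_same ?subrr ?mulr0 // !in_arc dd_add1 modn_small; last by lia.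
  by apply/idP/idP; lia.
rewrite (bigD1 (pt a m.+1)) //= (bigD1 (pt a 0)) /=; last first.
  by rewrite (dd_eq a) !dd_pt !modn_small.
rewrite big1 ?addr0 => [|u /andP[h1 h2]]; last first.
  have hu := dd_mem a u.
  move: h1 h2; rewrite !(dd_eq a) !dd_pt (modn_small hm) mod0n => h1 h2.
  rewrite copy_same ?subrr ?mulr0 // !in_arc dd_sub1.
  move: hu h1 h2; case: (dd a u) => [|j] hu h1 h2; first by rewrite eqxx in h2.
  rewrite modNS modn_small; last by lia.
  by apply/idP/idP; lia.
by rewrite P1 P2 P3 P4 C1 C2 C3 C4 !addrA.
Qed.
End Pts.

Local Notation g t S := (tstep_prob (@cycle_adj N) r delta t S [set: V]%SET).
Definition X t k := g t (arc ord0 k).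

Lemma arc_indep t : forall b k, (k <= N)%N -> g t (arc b k) = X t k.
Proof.
rewrite /X; elim: t => [|t IH] b k kN.
  by rewrite /= !arcT.
case: k kN => [|m] hm; first by rewrite !arc0.
case: (eqVneq m.+1 N) => [->|ne]; first by rewrite !arcN.
have hm' : (m.+1 < N)%N by rewrite ltn_neqAle ne.
rewrite !tstepS (arc_step b hm' (fun S0 => g t S0)) (arc_step ord0 hm' (fun S0 => g t S0)).
rewrite !IH //; by apply: ltnW.
Qed.

Lemma X_rec t m : (m.+1 < N)%N ->
  X t.+1 m.+1 = X t m.+1 + 2 * pup m.+1 * (X t m.+2 - X t m.+1)
                + 2 * pdn m.+1 * (X t m - X t m.+1).
Proof.
move=> hm; rewrite {1}/X tstepS (arc_step ord0 hm (fun S0 => g t S0)) !arc_indep //; try by apply: ltnW.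
  rewrite /X; ring.
all: by apply: ltnW; apply: ltnW.
Qed.

Lemma X0 t : X t 0 = 0.
Proof. by rewrite /X arc0 (g_0 _ _ _ ord0). Qed.

Lemma XN t : X t N = 1.
Proof. by rewrite /X arcN (g_T delta r_gt0 (@adj_sym n) (@adj_nb n) ord0). Qed.

Definition L k := lim ((fun t => X t k) @ \oo).

Lemma X_cvgL k : (fun t => X t k) @ \oo --> L k.
Proof.
apply: cvgP; apply: nondecreasing_cvgn.
  apply/nondecreasing_seqP => t.
  exact: (g_mono r_gt0 d_ge0 d_le1 (@adj_sym n) (@adj_nb n) ord0).
exists 1 => _ [t _ <-].
exact: (g_le1 r_gt0 d_ge0 d_le1 (@adj_sym n) (@adj_nb n) ord0).
Qed.

Lemma lim_uniq (u : nat -> R) (a b : R) : u @ \oo --> a -> u @ \oo --> b -> a = b.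
Proof.
move=> h1 h2; have e1 : lim (u @ \oo) = a by exact: cvg_lim.
have e2 : lim (u @ \oo) = b by exact: cvg_lim.
by rewrite -e1 -e2.
Qed.

Lemma L0 : L 0 = 0.
Proof.
apply: (lim_uniq (@X_cvgL 0)).
rewrite (_ : (fun t => X t 0) = fun _ => 0); last by apply: funext => t; rewrite X0.
exact: cvg_cst.
Qed.

Lemma LN : L N = 1.
Proof.
apply: (lim_uniq (@X_cvgL N)).
rewrite (_ : (fun t => X t N) = fun _ => 1); last by apply: funext => t; rewrite XN.
exact: cvg_cst.
Qed.

Lemma L_rel m : (m.+1 < N)%N ->
  pup m.+1 * (L m.+2 - L m.+1) = pdn m.+1 * (L m.+1 - L m).
Proof.
move=> hm.
have h1 : (fun t => X t.+1 m.+1) @ \oo --> L m.+1.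
  by rewrite (cvg_shiftS (fun t => X t m.+1)); exact: X_cvgL.
have h2 : (fun t => X t.+1 m.+1) @ \oo --> L m.+1 + 2 * pup m.+1 * (L m.+2 - L m.+1)
    + 2 * pdn m.+1 * (L m - L m.+1).
  rewrite (_ : (fun t => X t.+1 m.+1) = (fun t => X t m.+1 + 2 * pup m.+1 * (X t m.+2 - X t m.+1)
     + 2 * pdn m.+1 * (X t m - X t m.+1))); last by apply: funext => t; rewrite X_rec.
  by apply: cvgD; [apply: cvgD|]; try apply: cvgMl_tmp; try apply: cvgB; exact: X_cvgL.
have e := lim_uniq h1 h2.
lra.
Qed.

Lemma F_gt0 k : (k <= N)%N -> 0 < F_k N r k.
Proof.
rewrite /F_k; case: k => [|k] hk; first by rewrite mulr0 add0r subn0 ltr0n.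
have h1 : 0 < r * k.+1%:R by apply: mulr_gt0; rewrite ?ltr0n.
have h2 : 0 <= ((N - k.+1)%:R : R) by apply: ler0n.
lra.
Qed.

Lemma pup_gt0 k : (0 < k < N)%N -> 0 < pup k.
Proof.
case/andP => k0 kN; rewrite /pup.
have hF := F_gt0 (ltnW kN).
have hX : 0 < (if k == N.-1 then r else 1) by case: ifP.
have ha : 0 < 1 / N%:R * (r / ((if k == N.-1 then r else 1) + r)).
  apply: mulr_gt0; first by rewrite div1r invr_gt0 ltr0n.
  by apply: divr_gt0 => //; apply: addr_gt0.
have hb : 0 < r / F_k N r k * (1 / 2) by apply: mulr_gt0; apply: divr_gt0.
have := d_ge0; rewrite le0r => /orP[/eqP ->|dpos]; first by rewrite !mul0r add0r subr0 mul1r.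
have h1 : 0 < delta * (1 / N%:R) * (r / ((if k == N.-1 then r else 1) + r)) by rewrite -mulrA; apply: mulr_gt0.
have h2 : 0 <= (1 - delta) * (r / F_k N r k) * (1 / 2).
  by rewrite -mulrA; apply: mulr_ge0; [by rewrite subr_ge0 | exact: ltW].
by apply: (lt_le_trans h1); rewrite lerDl.
Qed.

Lemma two_div (A B : R) : (2 * A) / (2 * B) = A / B.
Proof. by rewrite invfM mulrACA mulfV ?mul1r. Qed.

Lemma gamma_eq k : (0 < k < N)%N -> gamma_k N r delta k = pdn k / pup k.
Proof.
case/andP => k0 kN.
have hF := F_gt0 (ltnW kN).
have hN : (N%:R : R) != 0 by rewrite pnatr_eq0.
have hF0 : F_k N r k != 0 by rewrite gt_eqF.
have h1r : 1 + r != 0 by rewrite gt_eqF //; apply: addr_gt0.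
have hr1 : r + 1 != 0 by rewrite gt_eqF //; apply: addr_gt0.
have hrr : r + r != 0 by rewrite gt_eqF //; apply: addr_gt0.
have h2 : (2 : R) != 0 by rewrite gt_eqF.
have hN3 : (3 + n%:R : R) != 0 by rewrite -natrD pnatr_eq0.
rewrite -[RHS]two_div /gamma_k /pdn /pup; cbv zeta.
have hk1 : (k == N.-1) -> (k == 1%N) = false by move=> /eqP ->.
case: ifP => [/eqP k1|k1].
  subst k; rewrite (_ : (1 == N.-1) = false) //; congr (_ / _); field; by rewrite ?hN ?hN3 ?hF0 ?h1r ?hr1 ?h2.
case: ifP => [/eqP kN1|kN1]; congr (_ / _); field; by rewrite ?hN ?hN3 ?hF0 ?h1r ?hr1 ?hrr ?h2.
Qed.

Lemma D_eq j : (j < N)%N ->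
  L j.+1 - L j = (\prod_(1 <= i < j.+1) gamma_k N r delta i) * L 1.
Proof.
elim: j => [|j IH] hj; first by rewrite L0 subr0 big_geq // mul1r.
have hj' : (j < N)%N by apply: ltn_trans hj.
rewrite big_nat_recr //= -mulrA (mulrC (gamma_k _ _ _ _)) mulrA -IH //.
have hp : pup j.+1 != 0 by rewrite gt_eqF // pup_gt0 // ltn0Sn.
rewrite gamma_eq; last by rewrite ltn0Sn.
have e := L_rel hj.
by rewrite mulrC mulrAC -e mulrAC mulfV // mul1r.
Qed.

Lemma L_final : L 1 * (1 + \sum_(1 <= j < N) \prod_(1 <= k < j.+1) gamma_k N r delta k) = 1.
Proof.
have e : \sum_(0 <= j < N) (L j.+1 - L j) = 1 by rewrite telescope_sumr // LN L0 subr0.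
transitivity (\sum_(0 <= j < N) (L j.+1 - L j)); last exact: e.
under [in RHS]eq_big_nat => j /andP[_ hj] do rewrite D_eq //.
have e1 : \prod_(1 <= k < 1) gamma_k N r delta k = 1 by rewrite big_geq.
by rewrite -big_distrl /= mulrC [in RHS]big_ltn // e1.
Qed.

Lemma fix_arc (u : V) : fix_prob (@cycle_adj N) r delta [set u]%SET = L 1.
Proof.
rewrite /fix_prob /L -(arc1 u).
congr (lim (_ @ \oo)); apply: funext => t.
exact: arc_indep.
Qed.

End Step.

Theorem mainTheorem5 (R : realType) (N : nat) (r delta : R) :
  (3 <= N)%N -> 0 < r -> 0 <= delta -> delta <= 1 ->
  fix_prob_avg (@cycle_adj N) r delta =
  1 / (1 + \sum_(1 <= j < N) \prod_(1 <= k < j.+1) gamma_k N r delta k).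
Proof.
case: N => [|[|[|n]]] // _ hr d0 d1.
have hL := L_final n hr d0 d1.
rewrite /fix_prob_avg.
under eq_bigr => u _ do rewrite (fix_arc hr d0 d1).
rewrite sumr_const card_ord -(mulr_natl (L n r delta 1)) mulrA div1r mulVf ?mul1r; last by rewrite pnatr_eq0.
have hS : (1 + \sum_(1 <= j < n.+3) \prod_(1 <= k < j.+1) gamma_k n.+3 r delta k) != 0.
  by apply/eqP => h; move: hL; rewrite h mulr0 => /eqP; rewrite eq_sym oner_eq0.
by apply: (mulIf hS); rewrite hL mulVf.
Qed.
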